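(* Let $N \geq 5$ be an odd integer and $\kappa$ a real number. Let $a>0$ and $b$ be real numbers such that the data set $\Phi_N=(X_1,\dots,X_N)$ consisting of $X_1 = a$, of $\tfrac{N-1}{2}$ points equal to $b - \tfrac{a}{N-1}$, and of $\tfrac{N-1}{2}$ points equal to $-b - \tfrac{a}{N-1}$ satisfies $\mathbb{E}(X)=0$, $\mathbb{E}(X^2)=1$ and $\mathbb{E}(X^4)=\kappa$, and such that $a^2$ is the larger root of the quadratic equation below. Then $a^2$ satisfies $$(a^2)^2 - 2\frac{N-1}{N+1}\,a^2 + G(N,\kappa) = 0,$$ and consequently $$a = a(N,\kappa) = \sqrt{ \frac{N-1}{N+1} + \sqrt{ \Bigl( \frac{N-1}{N+1} \Bigr)^2 - G(N,\kappa)}},$$ where $$G(N,\kappa) = \frac{N(N-1)^2 - (N-1)^3 \kappa}{(N+1)(N-3)}.$$ Furthermore, for fixed $\kappa > 1$, $a(N,\kappa) \sim [N (\kappa - 1)]^{1/4}$ as $N \to \infty$.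
   Context: For a finite data set $(X_1,\dots,X_N)$ and a function $f$, $\mathbb{E}(f(X))$ denotes the empirical mean $\frac1N\sum_{i=1}^N f(X_i)$. Since the mean is $0$ and the second moment is $1$, $\kappa=\mathbb{E}(X^4)$ is the kurtosis of the data set, and $a$ is the number of standard deviations by which $X_1$ lies above the mean. *)

(* Defs.v *)
From Stdlib Require Import Reals Lra List.
From Coquelicot Require Import Coquelicot.
Open Scope R_scope.

Definition emp_mean (f : R -> R) (l : list R) : R :=
  fold_right Rplus 0 (map f l) / INR (length l).

Definition PhiN (N : nat) (a b : R) : list R :=
  a :: repeat (b - a / INR (N - 1)) ((N - 1) / 2)
    ++ repeat (- b - a / INR (N - 1)) ((N - 1) / 2).

Definition G (N kappa : R) : R :=
  (N * (N - 1) ^ 2 - (N - 1) ^ 3 * kappa) / ((N + 1) * (N - 3)).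

Definition a_Nk (N kappa : R) : R :=
  sqrt ((N - 1) / (N + 1) + sqrt (((N - 1) / (N + 1)) ^ 2 - G N kappa)).

(* Main.v *)
Require Import Defs.
From Stdlib Require Import Reals Lra List Arith Lia.
From Coquelicot Require Import Coquelicot.
Open Scope R_scope.

Lemma sum_rep (f : R -> R) v k s :
  fold_right Rplus s (map f (repeat v k)) = INR k * f v + s.
Proof.
  induction k as [|k IH]; cbn [repeat map fold_right]; [simpl; ring|]. rewrite IH, S_INR; ring.
Qed.

Lemma emp_Phi (f : R -> R) m a b :
  emp_mean f (PhiN (2*m+1) a b) =
  (f a + INR m * (f (b - a/(2*INR m)) + f (-b - a/(2*INR m)))) / (2*INR m + 1).
Proof.
  unfold emp_mean, PhiN.
  replace (2*m+1-1)%nat with (2*m)%nat by lia.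
  replace ((2*m)/2)%nat with m by (rewrite Nat.mul_comm, Nat.div_mul; lia).
  rewrite mult_INR. simpl length. rewrite length_app, !repeat_length.
  simpl map. rewrite map_app. simpl fold_right. rewrite fold_right_app, !sum_rep.
  replace (S (m+m)) with (2*m+1)%nat by lia.
  rewrite plus_INR, mult_INR. simpl (INR 2). simpl (INR 1). replace (1+1) with 2 by ring. f_equal. ring.
Qed.

Lemma part1 (N : nat) (kappa a b : R) :
      (5 <= N)%nat -> Nat.Odd N ->
      0 < a ->
      emp_mean (fun x => x) (PhiN N a b) = 0 ->
      emp_mean (fun x => x ^ 2) (PhiN N a b) = 1 ->
      emp_mean (fun x => x ^ 4) (PhiN N a b) = kappa ->
      (forall y : R,
          y ^ 2 - 2 * ((INR N - 1) / (INR N + 1)) * y + G (INR N) kappa = 0 ->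
          y <= a ^ 2) ->
      (a ^ 2) ^ 2 - 2 * ((INR N - 1) / (INR N + 1)) * a ^ 2 + G (INR N) kappa = 0
      /\ a = a_Nk (INR N) kappa.
Proof.
  intros H5 [m ->] Ha _ H2 H4 Hmax.
  rewrite emp_Phi in H2, H4.
  assert (Hm : 2 <= INR m) by (replace 2 with (INR 2) by (simpl; ring); apply le_INR; lia).
  assert (EN : INR (2*m+1) = 2*INR m + 1) by (rewrite plus_INR, mult_INR; simpl; ring).
  rewrite EN in *.
  set (M := INR m) in *.
  set (c := a / (2*M)) in *.
  assert (Hb : b^2 = (2*M+1 - a^2 - 2*M*c^2)/(2*M)).
  { apply (f_equal (fun z => z * (2*M+1))) in H2.
    field_simplify in H2; [|lra]. apply (Rmult_eq_reg_r (2*M)); [|lra]. unfold Rdiv. rewrite Rmult_assoc, Rinv_l; lra. }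
  assert (Hk : kappa = (a^4 + M*(2*((2*M+1 - a^2 - 2*M*c^2)/(2*M))^2
                 + 12*((2*M+1 - a^2 - 2*M*c^2)/(2*M))*c^2 + 2*c^4))/(2*M+1)).
  { rewrite <- H4, <- Hb. field. lra. }
  assert (Hq : (a ^ 2) ^ 2 - 2 * ((2*M+1 - 1) / (2*M+1 + 1)) * a ^ 2 + G (2*M+1) kappa = 0).
  { rewrite Hk. unfold G, c. field. lra. }
  split; [exact Hq|].
  unfold a_Nk.
  set (p := (2*M+1-1)/(2*M+1+1)) in *.
  set (G0 := G (2*M+1) kappa) in *.
  assert (HG : G0 = -(a^2)^2 + 2*p*a^2) by lra.
  assert (HD : p^2 - G0 = (a^2-p)^2) by (rewrite HG; ring).
  assert (Hy := Hmax (p + Rabs (a^2-p))).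
  assert (Hab : (Rabs (a^2-p))^2 = (a^2-p)^2) by apply pow2_abs.
  assert (Hpos : 0 <= a^2 - p).
  { destruct (Rcase_abs (a^2-p)) as [Hn|Hn]; [|lra].
    rewrite Rabs_left in Hy, Hab by lra.
    assert (p + - (a ^ 2 - p) <= a ^ 2) by (apply Hy; rewrite HG; ring). lra. }
  rewrite HD, sqrt_pow2 by lra.
  replace (p + (a^2-p)) with (a^2) by ring.
  rewrite sqrt_pow2; lra.
Qed.

Lemma inv_n_lim : is_lim_seq (fun n => / INR n) 0.
Proof.
  assert (H := is_lim_seq_inv _ _ is_lim_seq_INR).
  simpl in H. apply H. discriminate.
Qed.

Section P2.
Variable kappa : R.
Hypothesis Hk : 1 < kappa.
Let k' := kappa - 1.
Definition Pf (x : R) := (1-x)/(1+x).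
Definition hf (x : R) := x*(1-x)^2/((1+x)^2*(kappa-1)) + (1-x)^2*((1-x)*kappa-1)/((1+x)*(1-3*x)*(kappa-1)).
Definition Ff (x : R) := sqrt (Pf x * sqrt (x/(kappa-1)) + sqrt (hf x)).

Lemma hf0 : hf 0 = 1.
Proof. unfold hf. field. lra. Qed.
Lemma Pf0 : Pf 0 = 1.
Proof. unfold Pf. field. Qed.
Lemma d0 : 0/(kappa-1) = 0.
Proof. field. lra. Qed.

Lemma Ff0 : Ff 0 = 1.
Proof.
  unfold Ff, Pf, hf. replace (0/(kappa-1)) with 0 by (field; lra).
  rewrite sqrt_0.
  replace (0 * (1 - 0) ^ 2 / ((1 + 0) ^ 2 * (kappa - 1)) +
     (1 - 0) ^ 2 * ((1 - 0) * kappa - 1) / ((1 + 0) * (1 - 3 * 0) * (kappa - 1))) with 1 by (field; lra).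
  rewrite sqrt_1. replace ((1 - 0) / (1 + 0) * 0 + 1) with 1 by (field; lra). apply sqrt_1.
Qed.

Lemma Ff_cont : continuity_pt Ff 0.
Proof.
  unfold Ff.
  apply (continuity_pt_comp (fun x => Pf x * sqrt (x / (kappa - 1)) + sqrt (hf x)) sqrt).
  - apply continuity_pt_plus.
    + apply continuity_pt_mult.
      * unfold Pf. reg. lra.
      * apply (continuity_pt_comp (fun x => x / (kappa - 1)) sqrt).
        -- reg.
        -- apply continuity_pt_sqrt. rewrite d0. lra.
    + apply (continuity_pt_comp hf sqrt).
      * unfold hf. reg; lra.
      * apply continuity_pt_sqrt. rewrite hf0. lra.
  - apply continuity_pt_sqrt. rewrite hf0, Pf0, d0, sqrt_0, sqrt_1. lra.
Qed.

Lemma ident (r : R) : 4 <= r ->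
  a_Nk r kappa / sqrt (sqrt (r * (kappa - 1))) = Ff (/ r).
Proof.
  intros Hr.
  assert (Hx : 0 < / r) by (apply Rinv_0_lt_compat; lra).
  assert (Hx4 : / r <= / 4) by (apply Rinv_le_contravar; lra).
  assert (Hrk : 0 < r * (kappa - 1)) by nra.
  assert (Hs : 0 < sqrt (r * (kappa - 1))) by (apply sqrt_lt_R0; lra).
  unfold a_Nk, Ff.
  rewrite <- sqrt_div_alt by exact Hs.
  f_equal.
  replace (/ r / (kappa - 1)) with (/ (r * (kappa - 1))) by (field; lra).
  rewrite sqrt_inv.
  replace (hf (/ r)) with ((((r - 1) / (r + 1)) ^ 2 - G r kappa) / (r * (kappa - 1))).
  2:{ unfold hf, G. field. repeat split; lra. }
  rewrite sqrt_div_alt by exact Hrk.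
  replace (Pf (/ r)) with ((r - 1) / (r + 1)) by (unfold Pf; field; lra).
  field. lra.
Qed.

Lemma lim2 : is_lim_seq (fun n => a_Nk (INR n) kappa / sqrt (sqrt (INR n * (kappa - 1)))) 1.
Proof.
  assert (H := is_lim_seq_continuous Ff _ 0 Ff_cont inv_n_lim).
  rewrite Ff0 in H.
  apply is_lim_seq_ext_loc with (fun n => Ff (/ INR n)); [|exact H].
  exists 4%nat. intros n Hn. symmetry. apply ident.
  replace 4 with (INR 4) by (simpl; ring). apply le_INR. lia.
Qed.
End P2.

Theorem proposition1 :
  (forall (N : nat) (kappa a b : R),
      (5 <= N)%nat -> Nat.Odd N ->
      0 < a ->
      emp_mean (fun x => x) (PhiN N a b) = 0 ->
      emp_mean (fun x => x ^ 2) (PhiN N a b) = 1 ->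
      emp_mean (fun x => x ^ 4) (PhiN N a b) = kappa ->
      (* a^2 is the larger root of the quadratic *)
      (forall y : R,
          y ^ 2 - 2 * ((INR N - 1) / (INR N + 1)) * y + G (INR N) kappa = 0 ->
          y <= a ^ 2) ->
      (a ^ 2) ^ 2 - 2 * ((INR N - 1) / (INR N + 1)) * a ^ 2 + G (INR N) kappa = 0
      /\ a = a_Nk (INR N) kappa)
  /\
  (forall kappa : R, 1 < kappa ->
      is_lim_seq
        (fun n : nat => a_Nk (INR n) kappa / sqrt (sqrt (INR n * (kappa - 1))))
        1).
Proof.
  split.
  - exact part1.
  - exact lim2.
Qed.
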